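(* Let $(X,U)$ be a minimizer of Problem 1 and let $(K,H,G,F)$ be the unique solution of $\begin{bmatrix} K & H \\ G & F \end{bmatrix}\begin{bmatrix} X \\ Z \end{bmatrix} = \begin{bmatrix} U \\ V \end{bmatrix}$. Fix $x_0\in\{\mathrm{e}_1,\dots,\mathrm{e}_n\}$ and let $u_{\mathcal{K}}^*=\big(u(0)^\top,\dots,u(N-1)^\top\big)^\top\in\mathbb{R}^{mN}$ be the input sequence generated by the closed loop of the plant $x(t+1)=Ax(t)+Bu(t)$, $x(0)=x_0$, with the compensator $z(t+1)=Fz(t)+Gx(t)$, $u(t)=Hz(t)+Kx(t)$, $z(0)=0$. Then $u_{\mathcal{K}}^*$ is an optimal solution $u^*$ of the open-loop $\ell_1$ optimal control problem $$\min_{u\in\mathbb{R}^{mN}}\ \sum_{t=0}^{N-1}\|u(t)\|_1\quad\text{s.t.}\quad \Phi_N u=-A^Nx_0,\quad -s\le Cx(t)+Du(t)\le s\ \ (t=0,\dots,N-1),$$ where $x(t)$ is the state generated by $u$ from $x_0$; i.e. $u^*=u_{\mathcal{K}}^*=Hz+Kx^*$.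
   Context: Plant: $x(t+1)=Ax(t)+Bu(t)$, $y(t)=Cx(t)+Du(t)$, with $x(t)\in\mathbb{R}^n$, $u(t)\in\mathbb{R}^m$ ($m\le n$), $y(t)\in\mathbb{R}^p$, $(A,B)$ reachable. $N\ge 2$ is a horizon such that the feasible sets are nonempty. $\Phi_N=[A^{N-1}B~\cdots~AB~B]\in\mathbb{R}^{n\times mN}$, assumed of full row rank $n$; the constraint $\Phi_Nu=-A^Nx_0$ is equivalent to $x(N)=0$. $\mathrm{e}_j$ denotes a standard basis vector. $P\in\mathbb{R}^{N\times N}$ is the nilpotent shift matrix $P=\begin{bmatrix}0 & 0\\ I_{N-1} & 0\end{bmatrix}$; $\otimes$ is the Kronecker product; $\|W\|_1=\sum_{i,j}|w_{ij}|$; $\mathrm{abs}(W)$ is entrywise absolute value; $\mathbf{1}_k$ is the all-ones vector of length $k$. Given $s\in\mathbb{R}^p$, Problem 1 is: minimize $\|U\|_1$ over $X\in\mathbb{R}^{n\times nN}$, $U\in\mathbb{R}^{m\times nN}$ subject to $AX+BU=X(P\otimes I_n)$, $X(\mathrm{e}_1\otimes I_n)=I_n$ ($\mathrm{e}_1\in\mathbb{R}^N$), and $\mathrm{abs}(CX+DU)\le s(\mathbf{1}_n\otimes\mathbf{1}_N)^\top$ entrywise. $Z=\begin{bmatrix}0_{n(N-1)\times n} & I_{n(N-1)}\end{bmatrix}$, $V=Z(P\otimes I_n)$. *)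

(* Defs.v *)
From mathcomp Require Import all_boot all_order all_algebra.
Set Implicit Arguments. Unset Strict Implicit. Unset Printing Implicit Defensive.
Import Order.TTheory GRing.Theory Num.Theory.
Local Open Scope ring_scope.

Section Defs.
Variable R : realFieldType.

Definition kron p q r s (A : 'M[R]_(p, q)) (B : 'M[R]_(r, s)) : 'M[R]_(p * r, q * s) :=
  \matrix_(i, j) \sum_(a < p) \sum_(b < r) \sum_(c < q) \sum_(d < s)
     (if ((i : nat) == a * r + b)%N && ((j : nat) == c * s + d)%N
      then A a c * B b d else 0).

(* nilpotent shift matrix P = [0 0; I_{N-1} 0] *)
Definition shiftP N : 'M[R]_N := \matrix_(i, j) ((i : nat) == j.+1)%:R.

Definition e1 N : 'cV[R]_N := \col_i ((i : nat) == 0)%:R.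

(* Z = [0_{n(N-1) x n}  I_{n(N-1)}] *)
Definition Zmat n N : 'M[R]_(n * (N - 1), N * n) :=
  \matrix_(i, j) ((j : nat) == n + i)%:R.

Definition Vmat n N : 'M[R]_(n * (N - 1), N * n) :=
  Zmat n N *m kron (shiftP N) (1%:M : 'M[R]_n).

Definition norm1 p q (W : 'M[R]_(p, q)) : R := \sum_i \sum_j `|W i j|.

Definition prob1_feasible n m p N (A : 'M[R]_n) (B : 'M[R]_(n, m))
    (C : 'M[R]_(p, n)) (D : 'M[R]_(p, m)) (s : 'cV[R]_p)
    (X : 'M[R]_(n, N * n)) (U : 'M[R]_(m, N * n)) : Prop :=
  [/\ A *m X + B *m U = X *m kron (shiftP N) (1%:M : 'M[R]_n),
      X *m castmx (erefl (N * n)%N, mul1n n) (kron (e1 N) (1%:M : 'M[R]_n)) = 1%:M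
    & forall i j, `|(C *m X + D *m U) i j| <= s i 0].

Definition prob1_minimizer n m p N (A : 'M[R]_n) (B : 'M[R]_(n, m))
    (C : 'M[R]_(p, n)) (D : 'M[R]_(p, m)) (s : 'cV[R]_p)
    (X : 'M[R]_(n, N * n)) (U : 'M[R]_(m, N * n)) : Prop :=
  prob1_feasible A B C D s X U /\
  forall X' U', prob1_feasible (N := N) A B C D s X' U' -> norm1 U <= norm1 U'.

(* Phi_N = [A^{N-1}B ... AB B] *)
Definition PhiN n m N (A : 'M[R]_n) (B : 'M[R]_(n, m)) : 'M[R]_(n, N * m) :=
  \matrix_(i, j) \sum_(t < N) \sum_(k < m)
     (if (j : nat) == (t * m + k)%N then (A ^+ (N.-1 - t)%N *m B) i k else 0).

(* the t-th block u(t) of a stacked vector u in R^{mN} (0 if t >= N) *)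
Definition blk m N (u : 'cV[R]_(N * m)) (t : nat) : 'cV[R]_m :=
  \col_k (match @insub _ (fun j => j < N * m)%N 'I_(N * m) (t * m + k)%N with
          | Some j => u j 0 | None => 0 end).

Definition stack m N (f : nat -> 'cV[R]_m) : 'cV[R]_(N * m) :=
  \col_j \sum_(t < N) \sum_(k < m) (if (j : nat) == (t * m + k)%N then f t k 0 else 0).

Fixpoint olstate n m N (A : 'M[R]_n) (B : 'M[R]_(n, m)) (x0 : 'cV[R]_n)
    (u : 'cV[R]_(N * m)) (t : nat) : 'cV[R]_n :=
  match t with
  | 0 => x0
  | t'.+1 => A *m olstate A B x0 u t' + B *m blk u t'
  end.

Definition ol_feasible n m p N (A : 'M[R]_n) (B : 'M[R]_(n, m))
    (C : 'M[R]_(p, n)) (D : 'M[R]_(p, m)) (s : 'cV[R]_p) (x0 : 'cV[R]_n)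
    (u : 'cV[R]_(N * m)) : Prop :=
  PhiN N A B *m u = - (A ^+ N *m x0) /\
  forall t, (t < N)%N -> forall i,
    - s i 0 <= (C *m olstate A B x0 u t + D *m blk u t) i 0 <= s i 0.

Definition ol_cost m N (u : 'cV[R]_(N * m)) : R :=
  \sum_(t < N) \sum_(k < m) `|blk u t k 0|.

Definition ol_optimal n m p N (A : 'M[R]_n) (B : 'M[R]_(n, m))
    (C : 'M[R]_(p, n)) (D : 'M[R]_(p, m)) (s : 'cV[R]_p) (x0 : 'cV[R]_n) (u : 'cV[R]_(N * m)) : Prop :=
  @ol_feasible n m p N A B C D s x0 u /\
  forall u', @ol_feasible n m p N A B C D s x0 u' -> ol_cost u <= ol_cost u'.

Fixpoint clstate n m q (A : 'M[R]_n) (B : 'M[R]_(n, m))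
    (K : 'M[R]_(m, n)) (H : 'M[R]_(m, q)) (G : 'M[R]_(q, n)) (F : 'M[R]_q)
    (x0 : 'cV[R]_n) (t : nat) : 'cV[R]_n * 'cV[R]_q :=
  match t with
  | 0 => (x0, 0)
  | t'.+1 =>
      let: (x, z) := clstate A B K H G F x0 t' in
      (A *m x + B *m (H *m z + K *m x), F *m z + G *m x)
  end.

Definition clinput n m q (A : 'M[R]_n) (B : 'M[R]_(n, m))
    (K : 'M[R]_(m, n)) (H : 'M[R]_(m, q)) (G : 'M[R]_(q, n)) (F : 'M[R]_q) (x0 : 'cV[R]_n) (t : nat) : 'cV[R]_m :=
  let: (x, z) := @clstate n m q A B K H G F x0 t in H *m z + K *m x.

End Defs.

(* Main.v *)
Require Import Defs.
From mathcomp Require Import all_boot all_order all_algebra.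
From mathcomp Require Import zify.
Import Order.TTheory GRing.Theory Num.Theory.
Local Open Scope ring_scope.

Section Aux.
Variable R : realFieldType.

Lemma ix_lt {N n} (t : 'I_N) (k : 'I_n) : (t * n + k < N * n)%N.
Proof. move: (ltn_ord t) (ltn_ord k); nia. Qed.

Definition ix {N n} (t : 'I_N) (k : 'I_n) : 'I_(N * n) := Ordinal (ix_lt t k).

Lemma eq_tm {m} t t' k k' : (k < m)%N -> (k' < m)%N ->
  ((t * m + k)%N == (t' * m + k')%N) = (t == t') && (k == k').
Proof.
move=> hk hk'; apply/eqP/andP => [E|[/eqP -> /eqP ->]] //.
have m0 : (0 < m)%N by case: m hk {hk'} E.
have ht : t = t'.
  by have := congr1 (divn ^~ m) E; rewrite /= !divnMDl // !divn_small // !addn0.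
split; first by rewrite ht.
by move/eqP: E; rewrite ht eqn_add2l.
Qed.

Definition ent {r c} (M : 'M[R]_(r, c)) (i : 'I_r) (x : nat) : R :=
  match @insub _ (fun j => j < c)%N 'I_c x with Some j => M i j | None => 0 end.

Lemma entE {r c} (M : 'M[R]_(r, c)) i (j : 'I_c) : ent M i j = M i j.
Proof. by rewrite /ent valK. Qed.

Lemma ent_out {r c} (M : 'M[R]_(r, c)) i x : (c <= x)%N -> ent M i x = 0.
Proof. by move=> h; rewrite /ent insubF // ltnNge h. Qed.

Lemma sum_pick {c} x (F : 'I_c -> R) :
  \sum_(j < c) (if (j : nat) == x then F j else 0) =
  match @insub _ (fun j => j < c)%N 'I_c x with Some j => F j | None => 0 end.
Proof.
case: insubP => [j0 _ <-|hx].
  rewrite (bigD1 j0) //= eqxx big1 ?addr0 // => j hj.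
  by rewrite (inj_eq val_inj) (negbTE hj).
by rewrite big1 // => j _; case: eqP => // E; move: hx; rewrite -E ltn_ord.
Qed.

Lemma ent_mul {r l c} (M : 'M[R]_(r, l)) (W : 'M[R]_(l, c)) i x :
  ent (M *m W) i x = \sum_k M i k * ent W k x.
Proof.
rewrite /ent; case: insubP => [j _ _|_]; first by rewrite mxE.
by rewrite big1 // => k _; rewrite mulr0.
Qed.

Lemma ent_add {r c} (M W : 'M[R]_(r, c)) i x : ent (M + W) i x = ent M i x + ent W i x.
Proof. by rewrite /ent; case: insubP => [j _ _|_]; rewrite ?mxE ?addr0. Qed.

Lemma sum_if_nat {N} (G : nat -> R) t :
  \sum_(t' < N) (if (t' : nat) == t then G t' else 0) = if (t < N)%N then G t else 0.
Proof. by rewrite -big_mkcond big_ord1_eq. Qed.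

Lemma sum_if_ord (I : finType) (j0 : I) (F : I -> R) :
  \sum_j (if j == j0 then F j else 0) = F j0.
Proof. by rewrite -big_mkcond big_pred1_eq. Qed.

Definition dv {N n} (j : 'I_(N * n)) : 'I_N.
Proof.
refine (Ordinal (_ : j %/ n < N)%N).
move: (nat_of_ord j) (ltn_ord j) => x; clear j; case: n => [|n']; first by rewrite muln0.
by rewrite ltn_divLR.
Defined.

Definition md {N n} (j : 'I_(N * n)) : 'I_n.
Proof.
refine (Ordinal (_ : j %% n < n)%N).
move: (nat_of_ord j) (ltn_ord j) => x; clear j; case: n => [|n']; first by rewrite muln0.
by rewrite ltn_pmod.
Defined.

Lemma ix_dv_md {N n} (j : 'I_(N * n)) : ix (dv j) (md j) = j.
Proof. by apply: val_inj; rewrite /= -divn_eq. Qed.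

Lemma dv_ix {N n} (t : 'I_N) (k : 'I_n) : dv (ix t k) = t.
Proof.
apply: val_inj => /=; have n0 : (0 < n)%N by case: n k => [[]|].
by rewrite divnMDl // divn_small // addn0.
Qed.

Lemma md_ix {N n} (t : 'I_N) (k : 'I_n) : md (ix t k) = k.
Proof. by apply: val_inj => /=; rewrite modnMDl modn_small. Qed.

Lemma sum_ix {N n} (F : 'I_(N * n) -> R) :
  \sum_j F j = \sum_(t < N) \sum_(k < n) F (ix t k).
Proof.
rewrite pair_big /=.
rewrite (reindex (fun p : 'I_N * 'I_n => ix p.1 p.2)) //=.
exists (fun j => (dv j, md j)) => [[t k] _|j _] /=.
  by rewrite dv_ix md_ix.
by rewrite ix_dv_md.
Qed.

Lemma ord_eqE {k} (x y : 'I_k) : (nat_of_ord x == nat_of_ord y) = (x == y).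
Proof. by []. Qed.

Lemma kronE {p q r s} (A : 'M[R]_(p, q)) (B : 'M[R]_(r, s)) a b c d :
  kron A B (ix a b) (ix c d) = A a c * B b d.
Proof.
rewrite mxE /=.
under eq_bigr => a' _ do under eq_bigr => b' _ do under eq_bigr => c' _ do
  under eq_bigr => d' _ do rewrite !eq_tm // !ord_eqE.
rewrite (bigD1 a) //= [X in _ + X]big1 ?addr0 => [|a' ha]; last first.
  move/negbTE: ha => ha.
  by do 3 (apply: big1 => ? _); rewrite eq_sym ha.
rewrite (bigD1 b) //= [X in _ + X]big1 ?addr0 => [|b' hb]; last first.
  move/negbTE: hb => hb.
  by do 2 (apply: big1 => ? _); rewrite eqxx (eq_sym b) hb.
rewrite (bigD1 c) //= [X in _ + X]big1 ?addr0 => [|c' hc]; last first.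
  move/negbTE: hc => hc.
  by apply: big1 => ? _; rewrite !eqxx (eq_sym c) hc.
rewrite (bigD1 d) //= [X in _ + X]big1 ?addr0 => [|d' hd]; last first.
  move/negbTE: hd => hd.
  by rewrite !eqxx (eq_sym d) hd.
by rewrite !eqxx.
Qed.


Definition ccn {r N n} (M : 'M[R]_(r, N * n)) (t : nat) (k : 'I_n) : 'cV[R]_r :=
  \col_i ent M i (t * n + k).

Lemma ccn_mul {r l N n} (M : 'M[R]_(r, l)) (W : 'M[R]_(l, N * n)) t k :
  ccn (M *m W) t k = M *m ccn W t k.
Proof.
apply/matrixP => i j; rewrite !mxE ent_mul; apply: eq_bigr => x _; by rewrite mxE.
Qed.

Lemma ccn_add {r N n} (M W : 'M[R]_(r, N * n)) t k :
  ccn (M + W) t k = ccn M t k + ccn W t k.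
Proof. by apply/matrixP => i j; rewrite !mxE ent_add. Qed.

Lemma ccn_out {r N n} (M : 'M[R]_(r, N * n)) t k : (N <= t)%N -> ccn M t k = 0.
Proof.
move=> h; apply/matrixP => i j; rewrite !mxE ent_out //.
have := leq_mul2r n N t; rewrite h orbT => h2; exact: leq_trans h2 (leq_addr _ _).
Qed.

Lemma ccn_ix {r N n} (M : 'M[R]_(r, N * n)) (t : 'I_N) k i :
  ccn M t k i 0 = M i (ix t k).
Proof. by rewrite mxE -entE. Qed.

Lemma mx_ccnP {r N n} (M1 M2 : 'M[R]_(r, N * n)) :
  (forall (t : 'I_N) k, ccn M1 t k = ccn M2 t k) -> M1 = M2.
Proof.
move=> h; apply/matrixP => i j; rewrite -(ix_dv_md j) -!ccn_ix.
by rewrite h.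
Qed.

Lemma mulbb (x : R) (b1 b2 : bool) :
  x * (b1%:R * b2%:R) = if b2 then (if b1 then x else 0) else 0.
Proof. by case: b1; case: b2; rewrite /= ?mulr1 ?mulr0 ?mul0r. Qed.

Lemma ccn_shift {r N n} (M : 'M[R]_(r, N * n)) t k :
  ccn (M *m kron (shiftP R N) (1%:M : 'M[R]_n)) t k = ccn M t.+1 k.
Proof.
apply/matrixP => i j; rewrite !mxE ent_mul.
case: (ltnP t N) => ht; last first.
  rewrite big1 ?ent_out // => [|l _]; last first.
    rewrite ent_out ?mulr0 //.
    have := leq_mul2r n N t; rewrite ht orbT => h2; exact: leq_trans h2 (leq_addr _ _).
  have := leq_mul2r n N t.+1; rewrite (leq_trans ht (leqnSn _)) orbT => h2.
  exact: leq_trans h2 (leq_addr _ _).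
rewrite sum_ix.
under eq_bigr => t' _ do under eq_bigr => k' _ do
  rewrite (entE _ _ (ix (Ordinal ht) k)) kronE !mxE -(entE M i (ix t' k')) /= mulbb.
under eq_bigr => t' _ do rewrite sum_if_ord.
rewrite (sum_if_nat (fun x => ent M i (x * n + k))); case: ifP => // h.
by rewrite ent_out //; move/negbT: h; rewrite -leqNgt; nia.
Qed.

Lemma cast_mul {r N n} (M : 'M[R]_(r, N * n)) i k : (0 < N)%N ->
  (M *m castmx (erefl (N * n)%N, mul1n n) (kron (e1 R N) (1%:M : 'M[R]_n))) i k
  = ent M i k.
Proof.
move=> N0; rewrite mxE sum_ix.
have Ek : cast_ord (esym (mul1n n)) k = ix (ord0 : 'I_1) k by apply: val_inj.
have Et : forall t' k', cast_ord (esym (erefl (N * n)%N)) (ix t' k') = ix t' k'.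
  by move=> *; apply: val_inj.
under eq_bigr => t' _ do under eq_bigr => k' _ do
  rewrite castmxE Et Ek kronE !mxE -(entE M i (ix t' k')) /= mulbb.
transitivity (\sum_(t' < N) (if (t' : nat) == 0%N then ent M i (t' * n + k) else 0)).
  apply: eq_bigr => t' _.
  exact: (sum_if_ord _ k (fun k' => if (t' : nat) == 0%N then ent M i (t' * n + k') else 0)).
by rewrite (sum_if_nat (fun x => ent M i (x * n + k))) N0 mul0n add0n.
Qed.

Lemma ifand (a b : bool) (x : R) :
  (if a && b then x else 0) = if a then (if b then x else 0) else 0.
Proof. by case: a. Qed.

Lemma blk_stack m N (f : nat -> 'cV[R]_m) t : (t < N)%N -> blk (stack N f) t = f t.
Proof.
move=> ht; apply/matrixP => k z; rewrite ord1 !mxE.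
change (t * m + k)%N with (nat_of_ord (ix (Ordinal ht) k)); rewrite valK mxE /=.
under eq_bigr => t' _ do under eq_bigr => k' _ do
  rewrite eq_tm // andbC ifand eq_sym ord_eqE (eq_sym t).
transitivity (\sum_(t' < N) (if (t' : nat) == t then f t' k 0 else 0)).
  apply: eq_bigr => t' _.
  exact: (sum_if_ord _ k (fun k' => if (t' : nat) == t then f t' k' 0 else 0)).
by rewrite (sum_if_nat (fun x => f x k 0)) ht.
Qed.

Lemma PhiN_mul n m N (A : 'M[R]_n) (B : 'M[R]_(n, m)) (u : 'cV[R]_(N * m)) :
  PhiN N A B *m u = \sum_(t < N) (A ^+ (N.-1 - t) *m B) *m blk u t.
Proof.
apply/matrixP => i z; rewrite ord1 !mxE summxE.
under eq_bigr => j _ do rewrite mxE big_distrl /=.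
under eq_bigr => j _ do under eq_bigr => t _ do rewrite big_distrl /=.
rewrite exchange_big; apply: eq_bigr => t _; rewrite exchange_big /= mxE.
apply: eq_bigr => k _.
under eq_bigr => j _ do rewrite (fun_if (fun x => x * u j 0)) mul0r.
rewrite sum_pick [blk u t k 0]mxE; by case: insub => //; rewrite mulr0.
Qed.

Lemma olstate_sum n m N (A : 'M[R]_n) (B : 'M[R]_(n, m)) x0 (u : 'cV[R]_(N * m)) t :
  olstate A B x0 u t = A ^+ t *m x0 + \sum_(s < t) (A ^+ (t.-1 - s) *m B) *m blk u s.
Proof.
elim: t => [|t IH] /=; first by rewrite expr0 mul1mx big_ord0 addr0.
rewrite IH big_ord_recr /= subnn expr0 mul1mx mulmxDr mulmxA addrA; congr (_ + _).
rewrite mulmx_sumr mulmxE -exprS; congr (_ + _); apply: eq_bigr => s _.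
rewrite !mulmxA; congr (_ *m _ *m _).
have -> : (t - s = (t.-1 - s).+1)%N by move: (ltn_ord s); lia.
by rewrite exprS mulmxE.
Qed.

Lemma olstate_N n m N (A : 'M[R]_n) (B : 'M[R]_(n, m)) x0 (u : 'cV[R]_(N * m)) :
  olstate A B x0 u N = A ^+ N *m x0 + PhiN N A B *m u.
Proof. by rewrite olstate_sum PhiN_mul. Qed.

Definition repl {r N n} (M : 'M[R]_(r, N * n)) (f : nat -> 'cV[R]_r) (i : 'I_n) :
  'M[R]_(r, N * n) := \matrix_(a, j) if md j == i then f (dv j) a 0 else M a j.

Lemma ccn_repl {r N n} (M : 'M[R]_(r, N * n)) f i t k :
  ccn (repl M f i) t k = if k == i then (if (t < N)%N then f t else 0) else ccn M t k.
Proof.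
case: (ltnP t N) => ht; last by rewrite !ccn_out //; case: ifP.
apply/matrixP => a z; rewrite ord1 (fun_if (fun v : 'cV[R]_r => v a 0)).
change t with (nat_of_ord (Ordinal ht)); rewrite !ccn_ix mxE md_ix dv_ix /=.
by [].
Qed.

Lemma norm1_ccn {r N n} (W : 'M[R]_(r, N * n)) :
  norm1 W = \sum_(t < N) \sum_(k < n) \sum_a `|ccn W t k a 0|.
Proof.
rewrite /norm1 exchange_big sum_ix; apply: eq_bigr => t _; apply: eq_bigr => k _.
by apply: eq_bigr => a _; rewrite ccn_ix.
Qed.

Lemma Zmat0 n N k : ccn (Zmat R n N) 0 k = 0.
Proof.
apply/matrixP => a z; rewrite !mxE /ent; case: insubP => [j _ hj|_] //.
rewrite mxE hj mul0n add0n; case: eqP => // E.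
by move: (ltn_ord k); rewrite E ltnNge leq_addr.
Qed.


Lemma main_lemma (n m p N : nat)
    (A : 'M[R]_n) (B : 'M[R]_(n, m)) (C : 'M[R]_(p, n)) (D : 'M[R]_(p, m))
    (s : 'cV[R]_p) (X : 'M[R]_(n, N * n)) (U : 'M[R]_(m, N * n))
    (K : 'M[R]_(m, n)) (H : 'M[R]_(m, n * (N - 1)))
    (G : 'M[R]_(n * (N - 1), n)) (F : 'M[R]_(n * (N - 1))) (i : 'I_n) :
  (0 < N)%N ->
  prob1_minimizer A B C D s X U ->
  block_mx K H G F *m col_mx X (Zmat R n N) = col_mx U (Vmat R n N) ->
  ol_optimal A B C D s (delta_mx i 0)
    (stack N (clinput A B K H G F (delta_mx i 0))).
Proof.
move=> N0 [[HAB HX Hs] Hmin] Hb.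
rewrite mul_block_col in Hb; case/eq_col_mx: Hb => HU HV.
set e : 'cV[R]_n := delta_mx i 0.
set Z := Zmat R n N.
have F1 : forall t k, A *m ccn X t k + B *m ccn U t k = ccn X t.+1 k.
  move=> t k; have := congr1 (fun M => ccn M t k) HAB.
  by rewrite /= ccn_shift ccn_add !ccn_mul.
have F2 : forall k, ccn X 0 k = delta_mx k 0.
  move=> k; apply/matrixP => a z; rewrite ord1 !mxE mul0n add0n.
  have := congr1 (fun M : 'M[R]_n => M a k) HX; rewrite /= cast_mul // => ->.
  by rewrite !mxE eqxx andbT.
have F3 : forall t, clstate A B K H G F e t = (ccn X t i, ccn Z t i).
  elim => [|t IH] /=; first by rewrite F2 Zmat0.
  rewrite IH; congr (_, _).
    by rewrite -F1 -HU ccn_add !ccn_mul (addrC (H *m _)).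
  rewrite /Z -ccn_shift -/(Vmat R n N) -HV ccn_add !ccn_mul.
  by rewrite addrC.
have F4 : forall t, clinput A B K H G F e t = ccn U t i.
  by move=> t; rewrite /clinput F3 -HU ccn_add !ccn_mul addrC.
set us := stack N _.
have F5 : forall t, (t < N)%N -> blk us t = ccn U t i.
  by move=> t ht; rewrite blk_stack // F4.
have F6 : forall t, (t <= N)%N -> olstate A B e us t = ccn X t i.
  elim => [|t IH] ht /=; first by rewrite F2.
  by rewrite IH ?(ltnW ht) // F5 // F1.
have HsN : forall t, (t < N)%N -> forall a,
    - s a 0 <= (C *m ccn X t i + D *m ccn U t i) a 0 <= s a 0.
  move=> t ht a; rewrite -ler_norml -ccn_mul -ccn_mul -ccn_add.
  change t with (nat_of_ord (Ordinal ht)); rewrite ccn_ix; exact: Hs.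
have Hfeas : ol_feasible A B C D s e us.
  split.
    apply/eqP; rewrite -addr_eq0 addrC -olstate_N F6 // ccn_out //.
  by move=> t ht a; rewrite F6 ?(ltnW ht) // F5 //; exact: HsN.
split => // u' [Hphi Hc].
set x' := olstate A B e u'.
have Hx'N : x' N = 0 by rewrite /x' olstate_N Hphi subrr.
set X' := repl X x' i.
set U' := repl U (blk u') i.
have Hfeas' : prob1_feasible A B C D s X' U'.
  split.
  - apply: mx_ccnP => t k.
    rewrite ccn_shift ccn_add !ccn_mul !ccn_repl (ltn_ord t).
    case: eqP => [_|_]; last exact: F1.
    case: ifP => h; first by [].
    transitivity (x' (nat_of_ord t).+1); first by [].
    have -> : (nat_of_ord t).+1 = N.
      by apply/eqP; rewrite eqn_leq ltn_ord leqNgt h.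
    exact: Hx'N.
  - apply/matrixP => a k; rewrite cast_mul //.
    transitivity (ccn X' 0 k a 0); first by rewrite mxE mul0n add0n.
    rewrite ccn_repl N0; case: eqP => [->|hk].
      by rewrite /x' /= /e !mxE eqxx andbT.
    by rewrite F2 !mxE eqxx andbT.
  - move=> a j; rewrite -(ix_dv_md j) -ccn_ix ccn_add !ccn_mul !ccn_repl (ltn_ord (dv j)).
    case: eqP => _; first by rewrite ler_norml; exact: Hc.
    by rewrite -!ccn_mul -ccn_add ccn_ix Hs.
have Hle := Hmin _ _ Hfeas'.
rewrite !norm1_ccn in Hle.
have split_i : forall (W : 'M[R]_(m, N * n)) (t : 'I_N),
    \sum_(k < n) \sum_a `|ccn W t k a 0| =
    \sum_a `|ccn W t i a 0| + \sum_(k < n | k != i) \sum_a `|ccn W t k a 0|.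
  by move=> W t; rewrite (bigD1 i).
rewrite (eq_bigr _ (fun t _ => split_i U t)) (eq_bigr _ (fun t _ => split_i U' t)) in Hle.
rewrite !big_split /= in Hle.
have E2 : \sum_(t < N) \sum_(k < n | k != i) \sum_a `|ccn U' t k a 0|
        = \sum_(t < N) \sum_(k < n | k != i) \sum_a `|ccn U t k a 0|.
  apply: eq_bigr => t _; apply: eq_bigr => k /negbTE hk.
  by rewrite /U' ccn_repl hk.
rewrite E2 lerD2r in Hle.
rewrite /ol_cost.
have E3 : \sum_(t < N) \sum_(k < m) `|blk us t k 0| = \sum_(t < N) \sum_a `|ccn U t i a 0|.
  by apply: eq_bigr => t _; rewrite F5.
have E4 : \sum_(t < N) \sum_(k < m) `|blk u' t k 0| = \sum_(t < N) \sum_a `|ccn U' t i a 0|.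
  by apply: eq_bigr => t _; rewrite /U' ccn_repl eqxx ltn_ord.
by rewrite E3 E4.
Qed.

End Aux.

Theorem corollary1 (R : realFieldType) (n m p N : nat)
    (A : 'M[R]_n) (B : 'M[R]_(n, m)) (C : 'M[R]_(p, n)) (D : 'M[R]_(p, m))
    (s : 'cV[R]_p) :
  (m <= n)%N ->
  row_full (PhiN n A B) ->            (* (A,B) reachable *)
  (2 <= N)%N ->
  row_full (PhiN N A B) ->            (* Phi_N has full row rank n *)
  forall (X : 'M[R]_(n, N * n)) (U : 'M[R]_(m, N * n)),
  prob1_minimizer A B C D s X U ->
  forall (K : 'M[R]_(m, n)) (H : 'M[R]_(m, n * (N - 1)))
         (G : 'M[R]_(n * (N - 1), n)) (F : 'M[R]_(n * (N - 1))),
  block_mx K H G F *m col_mx X (Zmat R n N) = col_mx U (Vmat R n N) ->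
  forall i : 'I_n,
  ol_optimal A B C D s (delta_mx i 0)
    (stack N (clinput A B K H G F (delta_mx i 0))).
Proof.
move=> _ _ hN _ X U hmin K H G F hb i.
exact: (@main_lemma R n m p N A B C D s X U K H G F i (ltnW hN) hmin hb).
Qed.
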